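(* For every $n\ge0$ and every $t\in\mathbb{R}$, $Q_n(1-t)=(-1)^n\sigma_n(t)$.
   Context: For positive integers $j$: $\sigma_0(j)=1$, $\sigma_i(j)=\sum_{1\le n_1<\cdots<n_i\le j-1}n_1\cdots n_i$ for $1\le i\le j-1$, $\sigma_i(j)=0$ for $i\ge j$; $Q_0(j)=1$ and $Q_k(j)=-\sum_{i=1}^k\sigma_i(j)Q_{k-i}(j)$ for $k\ge1$. For each fixed $n$, $\sigma_n(j)$ and $Q_n(j)$ agree on all positive integers $j$ with polynomials in $j$; $\sigma_n(t)$ and $Q_n(t)$ for real $t$ denote these polynomials evaluated at $t$. *)

(* Defs.v *)
From HB Require Import structures.
From mathcomp Require Import all_boot all_order all_algebra.
From mathcomp Require Import reals.
Set Implicit Arguments. Unset Strict Implicit. Unset Printing Implicit Defensive.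
Import Order.TTheory GRing.Theory Num.Theory.
Local Open Scope ring_scope.

(* sigma i j = sum over subsets {n_1 < ... < n_i} of {1,...,j-1} of n_1*...*n_i.
   Subsets of 'I_j avoiding 0 are exactly the subsets of {1,...,j-1}.
   Automatically: sigma 0 j = 1 and sigma i j = 0 for i >= j. *)
Definition sigma (i j : nat) : nat :=
  (\sum_(S : {set 'I_j} | (#|S| == i) && [forall x in S, 0 < val x])
      \prod_(x in S) val x)%N.

(* Qlist k j = [:: Q_0(j); ...; Q_k(j)], with Q_0 = 1 and
   Q_k = - \sum_(i=1..k) sigma_i(j) Q_(k-i)(j). *)
Fixpoint Qlist (k j : nat) : seq int :=
  match k with
  | 0 => [:: 1]
  | k'.+1 => let l := Qlist k' j in
      rcons l (- \sum_(1 <= i < k'.+2) ((sigma i j)%:Z * nth 0 l (k'.+1 - i)%N))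
  end.

Definition Q (k j : nat) : int := nth 0 (Qlist k j) k.

Definition is_sigma_poly (R : realType) (n : nat) (p : {poly R}) : Prop :=
  forall j : nat, (0 < j)%N -> p.[j%:R] = (sigma n j)%:R.

Definition is_Q_poly (R : realType) (n : nat) (q : {poly R}) : Prop :=
  forall j : nat, (0 < j)%N -> q.[j%:R] = (Q n j)%:~R.

(* Main.v *)
Require Import Defs.
From HB Require Import structures.
From mathcomp Require Import all_boot all_order all_algebra.
From mathcomp Require Import reals.
From mathcomp Require Import ring lra zify.
From Stdlib Require Import ClassicalEpsilon.
Set Implicit Arguments. Unset Strict Implicit. Unset Printing Implicit Defensive.
Import Order.TTheory GRing.Theory Num.Theory.
Local Open Scope ring_scope.

Lemma prodZX (R : realType) j (S : {set 'I_j}) (c : 'I_j -> R) :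
  \prod_(i0 in S) (c i0 *: 'X) = (\prod_(i0 in S) c i0)%:P * 'X^#|S| :> {poly R}.
Proof.
under eq_bigr do rewrite -mul_polyC.
by rewrite big_split /= -rmorph_prod prodr_const.
Qed.

Section S.
Variable R : realType.
Definition E (j : nat) : {poly R} := \prod_(i < j) ((i%:R : R) *: 'X + 1).

Lemma sigmaE i j : (sigma i j)%:R = (E j)`_i :> R.
Proof.
rewrite /E bigA_distr coef_sum /sigma natr_sum.
rewrite [RHS](bigID (fun S : {set 'I_j} => #|S| == i)) /=.
rewrite [X in _ = _ + X]big1 ?addr0; last first.
  move=> S /negbTE HS.
  rewrite -big_mkcond /= prodZX.
  by rewrite coefCM coefXn eq_sym HS mulr0.
rewrite [LHS]big_mkcondr /=; apply: eq_bigr => S /eqP HS.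
rewrite -big_mkcond /= prodZX.
rewrite coefCM coefXn HS eqxx mulr1 -natr_prod.
case: ifP => // /forallPn [x]; rewrite negb_imply => /andP [xS].
rewrite lt0n negbK => /eqP x0.
by rewrite (bigD1 x) //= x0 mul0n.
Qed.

Lemma E_rec j i : (E j.+1)`_i = (E j)`_i + (if i is i'.+1 then j%:R * (E j)`_i' else 0).
Proof.
rewrite /E big_ord_recr /= mulrDr mulr1 coefD addrC -scalerAr coefZ coefMX.
by case: i => [|i] /=; rewrite ?mulr0.
Qed.

Lemma E0 : E 0 = 1. Proof. by rewrite /E big_ord0. Qed.

Lemma sig0 j : (sigma 0 j)%:R = 1 :> R.
Proof.
rewrite sigmaE; elim: j => [|j IH]; first by rewrite E0 coef1.
by rewrite E_rec IH addr0.
Qed.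

Lemma sig_1 i : (sigma i 1)%:R = (i == 0)%:R :> R.
Proof. by rewrite sigmaE E_rec E0 coef1; case: i => [|i] /=; rewrite ?mul0r addr0. Qed.

Lemma sig_rec i j : (sigma i.+1 j.+1)%:R = (sigma i.+1 j)%:R + j%:R * (sigma i j)%:R :> R.
Proof. by rewrite !sigmaE E_rec. Qed.

Lemma size_Qlist k j : size (Qlist k j) = k.+1.
Proof. by elim: k => [|k IH] //=; rewrite size_rcons IH. Qed.

Lemma nth_Qlist k j i : (i <= k)%N -> nth 0 (Qlist k j) i = Q i j.
Proof.
elim: k i => [|k IH] i Hi; first by move: Hi; rewrite leqn0 => /eqP ->.
rewrite /= nth_rcons size_Qlist.
case: ltnP => Hik; first by rewrite IH.
have -> : i = k.+1 by apply/eqP; rewrite eqn_leq Hi Hik.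
by rewrite eqxx /Q /= nth_rcons size_Qlist ltnn eqxx.
Qed.

Lemma Q_rec k j : Q k.+1 j =
  - \sum_(1 <= i < k.+2) ((sigma i j)%:Z * Q (k.+1 - i) j).
Proof.
rewrite /Q /= nth_rcons size_Qlist ltnn eqxx; congr (- _).
apply: eq_big_nat => i /andP [h1 h2]; rewrite nth_Qlist //.
lia.
Qed.

Lemma intr_natz n : ((n%:Z)%:~R : R) = n%:R.
Proof. by []. Qed.

Lemma Q_recR k j : (Q k.+1 j)%:~R = 
  - \sum_(i < k.+1) ((sigma i.+1 j)%:R * (Q (k - i) j)%:~R) :> R.
Proof.
rewrite Q_rec rmorphN rmorph_sum /= big_add1 /= big_mkord.
congr (- _); apply: eq_bigr => i _.
by rewrite rmorphM /= intr_natz subSS.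
Qed.

Lemma poly_nat_eq (p q : {poly R}) :
  (forall j, (0 < j)%N -> p.[j%:R] = q.[j%:R]) -> p = q.
Proof.
move=> H; apply/eqP; rewrite -subr_eq0; apply/negPn/negP => Hn.
set rs := mkseq (fun i => (i.+1)%:R : R) (size (p - q)).
have H1 : all (root (p - q)) rs.
  apply/allP => x /mapP [i _ ->]; rewrite /root hornerD hornerN H //.
  by rewrite subrr.
have H2 : uniq rs.
  by apply: mkseq_uniq => a b /eqP; rewrite eqr_nat eqSS => /eqP.
by have := max_poly_roots Hn H1 H2; rewrite size_mkseq ltnn.
Qed.

Definition ff (k : nat) : {poly R} := \prod_(x <- mkseq (fun i => (i%:R : R)) k) ('X - x%:P).

Lemma ffE k x : (ff k).[x] = \prod_(i < k) (x - i%:R).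
Proof.
rewrite /ff horner_prod /mkseq big_map (_ : iota 0 k = index_iota 0 k); last by rewrite /index_iota subn0.
rewrite big_mkord.
by apply: eq_bigr => i _; rewrite hornerXsubC.
Qed.

Lemma ff_shift k x : (ff k.+1).[x + 1] - (ff k.+1).[x] = k.+1%:R * (ff k).[x].
Proof.
rewrite !ffE big_ord_recl big_ord_recr /=.
have -> : \prod_(i < k) (x + 1 - (lift ord0 i)%:R) = \prod_(i < k) (x - i%:R).
  apply: eq_bigr => i _; rewrite lift0 -natr1; ring.
rewrite -natr1; ring.
Qed.

Lemma size_ff k : size (ff k) = k.+1.
Proof. by rewrite /ff size_prod_XsubC size_mkseq. Qed.

Lemma lead_ff k : lead_coef (ff k) = 1.
Proof. by apply/monicP; apply: monic_prod_XsubC. Qed.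

Lemma antidiff n (f : {poly R}) : (size f <= n)%N ->
  exists g : {poly R}, forall x, g.[x + 1] - g.[x] = f.[x].
Proof.
elim: n f => [|n IH] f Hf.
  move: Hf; rewrite leqn0 size_poly_eq0 => /eqP ->.
  by exists 0 => x; rewrite !horner0 subrr.
case: (leqP (size f) n) => Hs; first exact: IH.
have Hsz : size f = n.+1 by apply/eqP; rewrite eqn_leq Hf Hs.
set a := lead_coef f.
have [g1 Hg1] : exists g1 : {poly R}, forall x, g1.[x + 1] - g1.[x] = (f - a *: ff n).[x].
  apply: IH; apply/leq_sizeP => m Hm.
  rewrite coefB coefZ.
  case: (ltngtP m n) => Hmn.
  - by move: Hm; rewrite leqNgt Hmn.
  - by rewrite !nth_default ?size_ff ?Hsz // mulr0 subr0.
  - have e1 : f`_m = a by rewrite /a lead_coefE Hsz Hmn.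
    have e2 : (ff n)`_m = 1 by rewrite -(lead_ff n) lead_coefE size_ff Hmn.
    by rewrite e1 e2 mulr1 subrr.
exists (g1 + (a / n.+1%:R) *: ff n.+1) => x.
have Hn0 : (n.+1%:R : R) != 0 by rewrite pnatr_eq0.
rewrite !hornerD !hornerZ.
have := Hg1 x; have := ff_shift n x.
rewrite hornerD hornerN hornerZ => h2 h3.
have -> : g1.[x + 1] + a / n.+1%:R * (ff n.+1).[x + 1] - (g1.[x] + a / n.+1%:R * (ff n.+1).[x])
  = (g1.[x + 1] - g1.[x]) + a / n.+1%:R * ((ff n.+1).[x + 1] - (ff n.+1).[x]) by ring.
rewrite h3 h2 mulrA divfK //; ring.
Qed.

Lemma sig_poly_ex n : exists p : {poly R}, is_sigma_poly n p.
Proof.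
elim: n => [|n [p Hp]].
  by exists 1 => j _; rewrite hornerC sig0.
have [g Hg] := antidiff (leqnn (size ('X * p))).
exists (g - (g.[1])%:P) => j; elim: j => [//|j IHj] _.
case: j IHj => [_|j IHj].
  by rewrite hornerD hornerN hornerC subrr sig_1.
rewrite sig_rec -IHj // -Hp // -(natr1 (R:=R) j.+1).
have := Hg (j.+1)%:R; rewrite hornerM hornerX !hornerD !hornerN !hornerC => <-.
ring.
Qed.

Definition P n : {poly R} := proj1_sig (constructive_indefinite_description _ (sig_poly_ex n)).
Lemma P_spec n : is_sigma_poly n (P n).
Proof. exact: (proj2_sig (constructive_indefinite_description _ (sig_poly_ex n))). Qed.

Lemma P_uniq n p : is_sigma_poly n p -> p = P n.
Proof. by move=> H; apply: poly_nat_eq => j Hj; rewrite H // P_spec. Qed.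

Lemma P0 : P 0 = 1.
Proof. by symmetry; apply: P_uniq => j _; rewrite hornerC sig0. Qed.

Lemma P_rec n x : (P n.+1).[x + 1] = (P n.+1).[x] + x * (P n).[x].
Proof.
have H : P n.+1 \Po ('X + 1) = P n.+1 + 'X * P n.
  apply: poly_nat_eq => j Hj.
  by rewrite horner_comp !hornerE natr1 !P_spec // sig_rec.
by have := congr1 (horner^~ x) H; rewrite horner_comp !hornerE.
Qed.

Lemma P_at1 n : (P n).[1] = (n == 0)%:R.
Proof. by have := P_spec n (isT : (0 < 1)%N); rewrite sig_1. Qed.

Lemma P_at0 n : (P n).[0] = (n == 0)%:R.
Proof.
case: n => [|n]; first by rewrite P0 hornerC.
by have := P_rec n 0; rewrite add0r mul0r addr0 P_at1 => <-.
Qed.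

Definition conv (a b : nat -> R) k := \sum_(i < k.+1) a i * b (k - i)%N.
Definition sh (t : R) (a : nat -> R) i := a i + (if i is i'.+1 then t * a i' else 0).

Lemma conv_ext a a' b b' k : (forall i, a i = a' i) -> (forall i, b i = b' i) ->
  conv a b k = conv a' b' k.
Proof. by move=> Ha Hb; apply: eq_bigr => i _; rewrite Ha Hb. Qed.

Lemma conv_shl t a b k : conv (sh t a) b k =
  conv a b k + (if k is k'.+1 then t * conv a b k' else 0).
Proof.
rewrite /conv /sh; under eq_bigr do rewrite mulrDl; rewrite big_split /=; congr (_ + _).
case: k => [|k]; first by rewrite big_ord_recl big_ord0 /= mul0r addr0.
rewrite big_ord_recl /= mul0r add0r mulr_sumr; apply: eq_bigr => i _.
by rewrite add0n /bump leq0n add1n subSS mulrA.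
Qed.

Lemma convC a b k : conv a b k = conv b a k.
Proof.
rewrite /conv (reindex_inj rev_ord_inj) /=; apply: eq_bigr => i _.
rewrite subSS subKn; first by rewrite mulrC.
by rewrite -ltnS.
Qed.

Lemma conv_shr t a b k : conv a (sh t b) k =
  conv a b k + (if k is k'.+1 then t * conv a b k' else 0).
Proof. by rewrite convC conv_shl; case: k => [|k]; rewrite !(convC b). Qed.

Definition Aseq t i := (P i).[t].
Definition Bseq t i := (-1) ^+ i * (P i).[1 - t].

Lemma Aseq_sh t i : Aseq (t + 1) i = sh t (Aseq t) i.
Proof.
rewrite /Aseq /sh; case: i => [|i]; first by rewrite P0 !hornerC addr0.
by rewrite P_rec.
Qed.

Lemma Bseq_sh t i : Bseq t i = sh t (Bseq (t + 1)) i.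
Proof.
rewrite /Bseq /sh (_ : 1 - (t + 1) = - t); last by ring.
case: i => [|i]; first by rewrite P0 !hornerC addr0.
rewrite (_ : 1 - t = - t + 1); last by ring.
rewrite P_rec exprS; ring.
Qed.

Lemma H_per t k : conv (Aseq (t + 1)) (Bseq (t + 1)) k = conv (Aseq t) (Bseq t) k.
Proof.
rewrite (conv_ext k (Aseq_sh t) (fun i => erefl)).
rewrite [RHS](conv_ext k (fun i => erefl) (Bseq_sh t)).
by rewrite conv_shl conv_shr.
Qed.

Lemma H_val j k : (0 < j)%N -> conv (Aseq j%:R) (Bseq j%:R) k = (k == 0)%:R.
Proof.
elim: j => [//|j IH] _.
case: j IH => [_|j IH].
  rewrite /conv big_ord_recl /= big1 ?addr0.
    by rewrite /Aseq /Bseq subrr P_at1 P_at0 mul1r subn0; case: k => [|k]; rewrite ?expr0 ?mulr1 ?mulr0.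
  by move=> i _; rewrite /Aseq P_at1 /bump leq0n add1n /= mul0r.
by rewrite -natr1 H_per IH.
Qed.

Lemma Q_P n j : (0 < j)%N -> (Q n j)%:~R = (-1) ^+ n * (P n).[1 - j%:R] :> R.
Proof.
move=> Hj; elim/ltn_ind: n => n IH.
case: n IH => [|k] IH; first by rewrite P0 hornerC mulr1.
rewrite Q_recR.
have := H_val k.+1 Hj; rewrite /conv big_ord_recl /= => HH.
have -> : \sum_(i < k.+1) (sigma i.+1 j)%:R * (Q (k - i) j)%:~R
  = \sum_(i < k.+1) Aseq j%:R (lift ord0 i) * Bseq j%:R (k.+1 - lift ord0 i) :> R.
  apply: eq_bigr => i _; rewrite lift0 subSS /Aseq /Bseq P_spec // IH //.
  by rewrite ltnS leq_subr.
move: HH; rewrite /Aseq /Bseq P0 hornerC mul1r subn0 => HH.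
rewrite -[RHS]opprK; congr (- _); apply/eqP; rewrite -addr_eq0 addrC; exact/eqP.
Qed.

End S.

Theorem lemma2p4 (R : realType) (n : nat) :
  (exists p : {poly R}, is_sigma_poly n p) /\
  (exists q : {poly R}, is_Q_poly n q) /\
  (forall (p q : {poly R}), is_sigma_poly n p -> is_Q_poly n q ->
     forall t : R, q.[1 - t] = (-1) ^+ n * p.[t]).
Proof.
set r : {poly R} := (-1) ^+ n *: (P R n \Po (1 - 'X)).
have Hr : is_Q_poly n r.
  move=> j Hj; rewrite /r hornerZ horner_comp hornerD hornerN hornerX hornerC.
  by rewrite Q_P.
split; first exact: (sig_poly_ex R n).
split; first by exists r.
move=> p q Hp Hq t.
have -> : q = r by apply: poly_nat_eq => j Hj; rewrite Hq // Hr.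
rewrite (P_uniq Hp) /r hornerZ horner_comp hornerD hornerN hornerX hornerC.
by rewrite (_ : 1 - (1 - t) = t) //; ring.
Qed.
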